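(* Let $\mathbb{F}$ be a field, and let $\mathcal{C}\subseteq\mathbb{F}^N$ be a systematic linear code of dimension $n$ which is an $(s,t)$-batch code, where $1\le s\le t$. Then for every integer $u$ with $1\le u\le s$ (and $u\le n$) and every integer $v$ with $1\le v\le \lfloor t/u\rfloor-1$, the code $\mathcal{C}$ is a $(u,v)$-ordered-batch code.
   Context: For a positive integer $m$, $[m]=\{1,\dots,m\}$. A linear code $\mathcal{C}\subseteq\mathbb{F}^N$ of dimension $n$ is systematic if for every $\mathbf{x}\in\mathbb{F}^n$ there is a unique codeword whose first $n$ coordinates equal $\mathbf{x}$ (coordinates $1,\dots,n$ are the information symbols). For $\mathbf{c}\in\mathcal{C}$ write $\mathbf{c}(i)$ for its $i$-th coordinate. A set $R\subseteq[N]$ is a recovering set for $i\in[n]$ if there are scalars $\lambda_k\in\mathbb{F}$ ($k\in R$) with $\mathbf{c}(i)=\sum_{k\in R}\lambda_k\mathbf{c}(k)$ for all $\mathbf{c}\in\mathcal{C}$. $(s,t)$-batch code ($1\le s\le t$): a systematic linear code $\mathcal{C}\subseteq\mathbb{F}^N$ of dimension $n$ such that for every choice of indices $i_1,\dots,i_s\in[n]$ (not necessarily distinct) and nonnegative integers $a_1,\dots,a_s$ with $\sum_{j=1}^s a_j=t$, there exist $t$ pairwise disjoint sets $R_{j,l}\subseteq[N]$ ($j\in[s]$, $l\in[a_j]$) such that each $R_{j,l}$ is a recovering set for $i_j$. $(u,v)$-ordered-batch code ($u,v$ positive integers): a systematic linear code $\mathcal{C}\subseteq\mathbb{F}^N$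 of dimension $n$ such that for every set $I=\{i_1,\dots,i_u\}\subseteq[n]$ of $u$ distinct indices there exist $uv$ pairwise disjoint sets $R_{j,l}\subseteq[N]$ ($j\in[u]$, $l\in[v]$), each $R_{j,l}$ a recovering set for $i_j$, such that the directed graph $D_I$ with vertex set $I$ and an arc $i_j\to i_k$ (for $j,k\in[u]$, $j=k$ allowed, giving a loop) whenever $i_k\in\bigcup_{l=1}^{v}R_{j,l}$, is acyclic (has no directed cycles, in particular no loops). *)

(* Defs.v *)
From HB Require Import structures.
From mathcomp Require Import all_boot all_order all_algebra.
Set Implicit Arguments. Unset Strict Implicit. Unset Printing Implicit Defensive.
Import GRing.Theory.
Local Open Scope ring_scope.

(* Information coordinates are the
   first n coordinates, i.e. widen_ord nN i for i : 'I_n (nN : n <= N). *)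

Definition systematic (F : fieldType) (N n : nat) (nN : (n <= N)%N)
    (C : {vspace 'rV[F]_N}) : Prop :=
  forall x : 'rV[F]_n, exists! c : 'rV[F]_N,
    c \in C /\ forall i : 'I_n, c 0 (widen_ord nN i) = x 0 i.

Definition recovering (F : fieldType) (N n : nat) (nN : (n <= N)%N)
    (C : {vspace 'rV[F]_N}) (R : {set 'I_N}) (i : 'I_n) : Prop :=
  exists lam : 'I_N -> F, forall c : 'rV[F]_N, c \in C ->
    c 0 (widen_ord nN i) = \sum_(k in R) lam k * c 0 k.

(* (s,t)-batch code.  The family R_{j,l} (j in [s], l in [a_j]) is encoded as
   R : 'I_s -> nat -> {set 'I_N}, only the values with l < a j being used. *)
Definition batch_code (F : fieldType) (N n : nat) (nN : (n <= N)%N)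
    (C : {vspace 'rV[F]_N}) (s t : nat) : Prop :=
  systematic nN C /\
  forall (idx : 'I_s -> 'I_n) (a : 'I_s -> nat),
    (\sum_(j < s) a j)%N = t ->
    exists R : 'I_s -> nat -> {set 'I_N},
      (forall (j : 'I_s) (l : nat), (l < a j)%N -> recovering nN C (R j l) (idx j)) /\
      (forall (j j' : 'I_s) (l l' : nat), (l < a j)%N -> (l' < a j')%N ->
          (j, l) != (j', l') -> [disjoint R j l & R j' l']).

(* Directed graph on vertices 'I_u given by an edge relation e is acyclic:
   no (nonempty) directed closed walk, loops included. *)
Definition acyclic (u : nat) (e : rel 'I_u) : Prop :=
  forall c : seq 'I_u, c != [::] -> ~~ cycle e c.

(* A u-set I of distinct information indices is
   given as an injective map idx : 'I_u -> 'I_n (vertex j stands for i_j).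
   Arc j -> k in D_I iff i_k lies in the union of R_{j,1..v}. *)
Definition ordered_batch_code (F : fieldType) (N n : nat) (nN : (n <= N)%N)
    (C : {vspace 'rV[F]_N}) (u v : nat) : Prop :=
  systematic nN C /\
  forall idx : 'I_u -> 'I_n, injective idx ->
    exists R : 'I_u -> 'I_v -> {set 'I_N},
      (forall j l, recovering nN C (R j l) (idx j)) /\
      (forall j j' l l', (j, l) != (j', l') -> [disjoint R j l & R j' l']) /\
      acyclic [rel j k | widen_ord nN (idx k) \in \bigcup_(l < v) R j l].

(* Main.v *)
Require Import Defs.
From HB Require Import structures.
From mathcomp Require Import all_boot all_order all_algebra.
From mathcomp Require Import zify.
From Stdlib Require Import Classical.

Lemma back_unique (T : Type) (e : T -> T -> Prop)
  (indeg : forall a b k, e a k -> e b k -> a = b) (g1 g2 : nat -> T) (M : nat) :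
  (forall i, e (g1 i) (g1 i.+1)) -> (forall i, e (g2 i) (g2 i.+1)) ->
  g1 M = g2 M -> forall i, (i <= M)%N -> g1 i = g2 i.
Proof.
move=> h1 h2 hM.
have H : forall m, (m <= M)%N -> g1 (M - m) = g2 (M - m).
  elim=> [|m IH] hm; first by rewrite subn0.
  have E : (M - m = (M - m.+1).+1)%N by lia.
  have IH' := IH (ltnW hm); rewrite E in IH'.
  apply: (indeg _ _ _ (h1 (M - m.+1)%N)); rewrite IH'; exact: h2.
move=> i hi; have := H (M - i)%N (leq_subr _ _).
by rewrite subKn.
Qed.

Lemma periodic (T : Type) (e : T -> T -> Prop) (f : nat -> T) (A : nat) :
  (0 < A)%N -> f A = f 0 -> (forall i, (i < A)%N -> e (f i) (f i.+1)) ->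
  forall i, e (f (i %% A)) (f (i.+1 %% A)).
Proof.
move=> A0 fA h i.
have lt := ltn_pmod i A0.
have E : (i.+1 %% A = (i %% A).+1 %% A)%N by rewrite -addn1 -modnDml addn1.
case: (ltngtP (i %% A).+1 A) => c.
- by rewrite E (modn_small c); apply: h.
- by move: c; rewrite ltnS leqNgt lt.
- by rewrite E c modnn; have := h (i %% A) lt; rewrite c fA.
Qed.

Arguments back_unique {T e} indeg {g1 g2 M}.
Arguments periodic {T e f A}.
Definition CW (T : Type) (e : T -> T -> Prop) (j k : T) : Prop :=
  exists A (f : nat -> T), [/\ (0 < A)%N, f 0 = j, f 1 = k, f A = j &
    forall i, (i < A)%N -> e (f i) (f i.+1)].
Arguments CW {T}.

Lemma mod1_eq (T : Type) (f : nat -> T) A :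
  (0 < A)%N -> f A = f 0 -> f (1 %% A) = f 1.
Proof.
case: A => [|[|A]] //= _ h.
Qed.

Arguments mod1_eq {T f A}.
Lemma cw_unique (T : Type) (e : T -> T -> Prop)
  (indeg : forall a b k, e a k -> e b k -> a = b) j k k' :
  CW e j k -> CW e j k' -> k = k'.
Proof.
move=> [A [f [A0 f0 f1 fA hf]]] [B [g [B0 g0 g1 gB hg]]].
have fA' : f A = f 0 by rewrite fA f0.
have gB' : g B = g 0 by rewrite gB g0.
have P1 := periodic A0 fA' hf.
have P2 := periodic B0 gB' hg.
have := back_unique indeg P1 P2 (M := (A * B)%N).
rewrite modnMr modnMl f0 g0 => /(_ erefl 1%N).
rewrite mod1_eq // mod1_eq // f1 g1; apply.
by rewrite muln_gt0 A0 B0.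
Qed.

Arguments cw_unique {T e} indeg {j k k'}.
Theorem proposition1 (F : fieldType) (N n : nat) (nN : (n <= N)%N)
    (C : {vspace 'rV[F]_N}) (s t : nat) :
  (1 <= s)%N -> (s <= t)%N -> batch_code nN C s t ->
  forall u v : nat, (1 <= u)%N -> (u <= s)%N -> (u <= n)%N ->
    (1 <= v)%N -> (v <= t %/ u - 1)%N ->
    ordered_batch_code nN C u v.
Proof.
move=> s1 st [sys bat] u v u1 us un v1 vle.
split => // idx _.
have uvt : (u * v.+1 <= t)%N.
  have h1 : (v.+1 <= t %/ u)%N by lia.
  apply: (leq_trans (leq_mul (leqnn u) h1)).
  by rewrite mulnC leq_divM.
pose j0 : 'I_s := Ordinal s1.
pose u0 : 'I_u := Ordinal u1.
pose idx' (j : 'I_s) : 'I_n :=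
  if (insub (val j) : option 'I_u) is Some jj then idx jj else idx u0.
pose a (j : 'I_s) : nat :=
  ((if (val j < u)%N then v.+1 else 0) + (if val j == 0%N then t - u * v.+1 else 0))%N.
have suma : (\sum_(j < s) a j)%N = t.
  have S2 : (\sum_(j < s) (if val j == 0%N then t - u * v.+1 else 0))%N = (t - u * v.+1)%N.
    rewrite (bigD1 j0) //= big1 ?addn0 // => j hj; case: eqP => // h; move: hj.
    by rewrite (_ : j = j0) ?eqxx //; apply: val_inj.
  have S1 : (\sum_(j < s) (if (val j < u)%N then v.+1 else 0))%N = (u * v.+1)%N.
    rewrite -(big_mkord xpredT (fun j => if (j < u)%N then v.+1 else 0%N)).
    rewrite (big_cat_nat (leq0n u) us) /=.
    rewrite (@eq_big_nat _ _ _ 0 u _ (fun _ => v.+1)); last by move=> i /andP[_ ->].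
    rewrite (@eq_big_nat _ _ _ u s _ (fun _ => 0%N)); last first.
      by move=> i /andP[h _]; rewrite ltnNge h.
    rewrite !sum_nat_const_nat; lia.
  rewrite big_split /= S1 S2; lia.
have [Q [Qrec Qdis]] := bat idx' a suma.
pose wid (j : 'I_u) : 'I_s := widen_ord us j.
have ha : forall j : 'I_u, (v.+1 <= a (wid j))%N.
  by move=> j; rewrite /a /= ltn_ord leq_addr.
have hidx : forall j, idx' (wid j) = idx j.
  by move=> j; rewrite /idx' /= valK.
have own : forall (j j' k : 'I_u) (l l' : 'I_v.+1),
    widen_ord nN (idx k) \in Q (wid j) l -> widen_ord nN (idx k) \in Q (wid j') l' ->
    j = j' /\ l = l'.
  move=> j j' k l l' h1 h2.
  case: (boolP ((wid j, val l) == (wid j', val l'))).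
    rewrite xpair_eqE => /andP[/eqP e1 /eqP e2]; split; apply: val_inj => //.
    exact: (congr1 val e1).
  move=> hne.
  have := Qdis _ _ _ _ (leq_trans (ltn_ord l) (ha j)) (leq_trans (ltn_ord l') (ha j')) hne.
  by move/disjointFr => /(_ _ h1); rewrite h2.
pose full (j k : 'I_u) : Prop := exists l : 'I_v.+1, widen_ord nN (idx k) \in Q (wid j) l.
have indeg : forall a b k, full a k -> full b k -> a = b.
  by move=> x y k [l hl] [l' hl']; case: (own _ _ _ _ _ hl hl').
have hd : forall j : 'I_u, exists dl : 'I_v.+1, forall k, CW full j k ->
    widen_ord nN (idx k) \in Q (wid j) dl.
  move=> j; case: (classic (exists k, CW full j k)) => [[k hk]|hn].
    have hk' := hk; case: hk' => [A [f [A0 f0 f1 fA hf]]].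
    have := hf 0%N A0; rewrite f0 f1 => -[l hl].
    by exists l => k' hk'; rewrite (cw_unique indeg hk' hk).
  by exists ord0 => k hk; exfalso; apply: hn; exists k.
have [d hd'] := fin_all_exists hd.
exists (fun j (l : 'I_v) => Q (wid j) (lift (d j) l)).
split.
  move=> j l; rewrite -hidx; apply: Qrec.
  exact: leq_trans (ltn_ord _) (ha j).
split.
  move=> j j' l l' hne; apply: Qdis; try exact: leq_trans (ltn_ord _) (ha _).
  apply: contra hne => /eqP [h1 h2].
  have ej : j = j' := val_inj h1; rewrite -ej in h2 *.
  have el : l = l' by apply: (@lift_inj _ (d j)); apply: val_inj; exact: h2.
  by rewrite el eqxx.
move=> c hc; apply/negP => hcyc.
case: c hc hcyc => [//|j c'] _ /= hpath.
pose sq := rcons c' j.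
pose f i := nth j (j :: sq) i.
have arcs : forall i, (i < size sq)%N -> full (f i) (f i.+1).
  move=> i hi; have := (pathP j hpath) i hi.
  rewrite /= => /bigcupP [l _ hl].
  by exists (lift (d (f i)) l).
have hCW : CW full j (f 1%N).
  exists (size sq), f; split => //.
  - by rewrite /sq size_rcons.
  - by rewrite /f /sq size_rcons /= nth_rcons ltnn eqxx.
have h0 : (0 < size sq)%N by rewrite /sq size_rcons.
have := (pathP j hpath) 0%N h0.
rewrite /= => /bigcupP [l _ hl].
have := hd' j (f 1%N) hCW.
rewrite /f /= => hl2.
have [_ e] := own j j (nth j sq 0) (lift (d j) l) (d j) hl hl2.
by move: (neq_lift (d j) l); rewrite e eqxx.
Qed.
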